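(* For all integers $t\ge0$, $\mathcal K(t)\ge0$.
   Context: Given $n$, nonnegative numbers $\sigma_1^2,\dots,\sigma_n^2$, $\gamma>0$, $\zeta\in(0,1]$, $\Delta\in[0,1)$. For $j\in[n]$: $\Omega_j=1-\gamma\zeta\sigma_j^2+\Delta$, $\lambda_{2,j},\lambda_{3,j}=\frac{-2\Delta+\Omega_j^2\pm\sqrt{\Omega_j^2(\Omega_j^2-4\Delta)}}{2}$ (complex square root if the argument is negative). $\mathcal K(t)=\gamma^2\zeta(1-\zeta)H_2(t)$ with $H_2(t)=\frac1n\sum_{j=1}^n\frac{2\sigma_j^4}{\Omega_j^2-4\Delta}\big(-\Delta^{t+1}+\frac12\lambda_{2,j}^{t+1}+\frac12\lambda_{3,j}^{t+1}\big)$ (terms with $\Omega_j^2=4\Delta$ understood by continuity). *)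

(* Defs.v *)
From HB Require Import structures.
From mathcomp Require Import all_boot all_order all_algebra.
From mathcomp Require Import complex.
Set Implicit Arguments. Unset Strict Implicit. Unset Printing Implicit Defensive.
Import Order.TTheory GRing.Theory Num.Theory.
Local Open Scope ring_scope.
Local Open Scope complex_scope.

Section Defs.
Variable R : rcfType.

Definition csqrt_real (x : R) : R[i] :=
  if 0 <= x then (Num.sqrt x)%:C else Complex 0 (Num.sqrt (- x)).

Definition Omega (gamma zeta Delta s : R) : R := 1 - gamma * zeta * s + Delta.

Definition lam2 (Om Delta : R) : R[i] :=
  ((- 2 * Delta + Om ^+ 2)%:C + csqrt_real (Om ^+ 2 * (Om ^+ 2 - 4 * Delta))) / 2%:R.
Definition lam3 (Om Delta : R) : R[i] :=
  ((- 2 * Delta + Om ^+ 2)%:C - csqrt_real (Om ^+ 2 * (Om ^+ 2 - 4 * Delta))) / 2%:R.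

(* j-th summand of H_2(t), with s = sigma_j^2 (so sigma_j^4 = s^2). *)
Definition H2term (gamma zeta Delta s : R) (t : nat) : R :=
  let Om := Omega gamma zeta Delta s in
  if Om ^+ 2 - 4 * Delta == 0 then
    2 * s ^+ 2 * ((t.+1)%:R ^+ 2 * Delta ^+ t / 2)
  else
    2 * s ^+ 2 / (Om ^+ 2 - 4 * Delta) *
    complex.Re (- (Delta ^+ t.+1)%:C + (lam2 Om Delta) ^+ t.+1 / 2%:R
        + (lam3 Om Delta) ^+ t.+1 / 2%:R).

Definition H2 (n : nat) (s2 : 'I_n -> R) (gamma zeta Delta : R) (t : nat) : R :=
  n%:R^-1 * \sum_(j < n) H2term gamma zeta Delta (s2 j) t.

Definition Kfun (n : nat) (s2 : 'I_n -> R) (gamma zeta Delta : R) (t : nat) : R :=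
  gamma ^+ 2 * zeta * (1 - zeta) * H2 s2 gamma zeta Delta t.
End Defs.

(* Main.v *)
Require Import Defs.
From HB Require Import structures.
From mathcomp Require Import all_boot all_order all_algebra.
From mathcomp Require Import complex.
From mathcomp Require Import ring lra.
Import Order.TTheory GRing.Theory Num.Theory.
Local Open Scope ring_scope.

Section Aux.
Variable R : rcfType.
Local Open Scope complex_scope.

Fixpoint U (Om D : R) (m : nat) : R :=
  match m with
  | 0 => 0
  | S k => match k with 0 => 1 | S j => Om * U Om D k - D * U Om D j end
  end.

Lemma csq (x : R) : csqrt_real x ^+ 2 = x%:C%C.
Proof.
rewrite /csqrt_real; case: ifP => h.
  by rewrite -rmorphXn /= sqr_sqrtr.
have hx : 0 <= - x by rewrite oppr_ge0; apply: ltW; rewrite ltNge h.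
have := sqr_sqrtr hx; rewrite expr2 => e.
rewrite expr2 /= /GRing.mul /= e !mul0r mulr0 addr0 sub0r opprK.
by [].
Qed.

Lemma Upow (p q : R[i]) (Om D : R) : p + q = Om%:C%C -> p * q = D%:C%C ->
  forall m, p ^+ m - q ^+ m = (p - q) * (U Om D m)%:C%C.
Proof.
move=> hS hP.
suff H : forall m, p ^+ m - q ^+ m = (p - q) * (U Om D m)%:C%C /\ p ^+ m.+1 - q ^+ m.+1 = (p - q) * (U Om D m.+1)%:C%C by move=> m; case: (H m).
elim=> [|m [IH1 IH2]].
  by rewrite /= !expr0 !expr1 subrr mulr0 mulr1.
split=> //.
have -> : p ^+ m.+2 - q ^+ m.+2 = (p + q) * (p ^+ m.+1 - q ^+ m.+1) - (p * q) * (p ^+ m - q ^+ m).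
  rewrite !exprS; ring.
rewrite IH1 IH2 hS hP.
have -> : U Om D m.+2 = Om * U Om D m.+1 - D * U Om D m by [].
rewrite rmorphB !rmorphM /=; ring.
Qed.

Ltac push := rewrite ?(rmorphB, rmorphD, rmorphM, rmorphXn, rmorphN, rmorph_nat, rmorph1, rmorph0) /=.

Lemma two_neq0 : (2%:R : R[i]) != 0.
Proof. by rewrite pnatr_eq0. Qed.

Lemma key (Om D : R) m :
  (- (D ^+ m)%:C + lam2 Om D ^+ m / 2%:R + lam3 Om D ^+ m / 2%:R
   = ((Om ^+ 2 - 4 * D) * U Om D m ^+ 2 / 2)%:C)%C.
Proof.
have h2 := two_neq0.
have hr := csq (Om ^+ 2 - 4 * D).
set r := csqrt_real (Om ^+ 2 - 4 * D) in hr.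
have hc := csq (Om ^+ 2 * (Om ^+ 2 - 4 * D)).
set c := csqrt_real (Om ^+ 2 * (Om ^+ 2 - 4 * D)) in hc.
set p := ((Om%:C + r) / 2%:R)%C.
set q := ((Om%:C - r) / 2%:R)%C.
have hS : p + q = (Om%:C)%C by rewrite /p /q; field => //.
have hP : p * q = (D%:C)%C.
  have -> : p * q = ((Om%:C) ^+ 2 - r ^+ 2) / 4%:R by rewrite /p /q; field => //.
  rewrite hr; push; field => //.
have hD : p - q = r by rewrite /p /q; field => //.
have F : - (D ^+ m)%:C%C + (p ^+ 2) ^+ m / 2%:R + (q ^+ 2) ^+ m / 2%:R
   = ((Om ^+ 2 - 4 * D) * U Om D m ^+ 2 / 2)%:C%C.
  have -> : - (D ^+ m)%:C%C + (p ^+ 2) ^+ m / 2%:R + (q ^+ 2) ^+ m / 2%:R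
     = ((p ^+ m - q ^+ m) ^+ 2 + 2%:R * (p * q) ^+ m) / 2%:R - (D ^+ m)%:C%C.
    rewrite -!exprM mulnC !exprM [(p * q) ^+ m]exprMn; set a := p ^+ m; set b := q ^+ m; field => //.
  rewrite (@Upow p q Om D hS hP m) hD hP exprMn hr; push; field => //.
have hp2 : p ^+ 2 = ((Om ^+ 2)%:C + 2%:R * Om%:C * r + r ^+ 2) / 4%:R.
  rewrite /p; push; field => //.
have hq2 : q ^+ 2 = ((Om ^+ 2)%:C - 2%:R * Om%:C * r + r ^+ 2) / 4%:R.
  rewrite /q; push; field => //.
have hcc : (c - Om%:C * r) * (c + Om%:C * r) = 0.
  have -> : (c - Om%:C * r) * (c + Om%:C * r) = c ^+ 2 - (Om%:C) ^+ 2 * r ^+ 2 by ring.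
  rewrite hc hr; push; ring.
rewrite /lam2 /lam3 -/c.
move/eqP: hcc; rewrite mulf_eq0 => /orP [/eqP e | /eqP e].
  have -> : c = Om%:C * r by apply/eqP; rewrite -subr_eq0 e.
  rewrite -F hp2 hq2 hr; push.
  congr (_ + _ ^+ m / _ + _ ^+ m / _); field => //.
have -> : c = - (Om%:C * r) by apply/eqP; rewrite -subr_eq0 opprK e.
rewrite -F hp2 hq2 hr; push.
rewrite -addrA [X in _ + X = _]addrC addrA.
congr (_ + _ ^+ m / _ + _ ^+ m / _); field => //.
Qed.
End Aux.
Arguments U {R}.

Lemma H2term_ge0 (R : rcfType) (g z D s : R) t : 0 <= D -> 0 <= H2term g z D s t.
Proof.
move=> hD; rewrite /H2term /=; case: ifP => h.
  apply: mulr_ge0; first by apply: mulr_ge0; [rewrite ler0n | rewrite sqr_ge0].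
  apply: divr_ge0; last by rewrite ler0n.
  by apply: mulr_ge0; [rewrite sqr_ge0 | rewrite exprn_ge0].
rewrite key /=.
set X := (_ - 4 * D) in h *.
have hX : X != 0 by rewrite h.
have -> : 2 * s ^+ 2 / X * (X * U (Omega g z D s) D t.+1 ^+ 2 / 2)
   = s ^+ 2 * U (Omega g z D s) D t.+1 ^+ 2.
  by field; rewrite hX /= ?pnatr_eq0.
by apply: mulr_ge0; rewrite sqr_ge0.
Qed.

Theorem lemma5 (R : rcfType) (n : nat) (s2 : 'I_n -> R) (gamma zeta Delta : R)
  (hs2 : forall j, 0 <= s2 j) (hgamma : 0 < gamma)
  (hzeta0 : 0 < zeta) (hzeta1 : zeta <= 1)
  (hDelta0 : 0 <= Delta) (hDelta1 : Delta < 1) :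
  forall t : nat, 0 <= Kfun s2 gamma zeta Delta t.
Proof.
move=> t; rewrite /Kfun /H2.
apply: mulr_ge0.
  apply: mulr_ge0; last by rewrite subr_ge0.
  by apply: mulr_ge0; [rewrite sqr_ge0 | apply: ltW].
apply: mulr_ge0; first by rewrite invr_ge0 ler0n.
by apply: sumr_ge0 => j _; apply: H2term_ge0.
Qed.
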